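(* Let $n$ be a positive integer and let $f\colon\{0,1\}^n\to\mathbb{R}$ be any function with a unique global minimum. Then the expected optimization time of the (1+1)~EA minimizing $f$ is at least the expected optimization time of the (1+1)~EA minimizing $\textsc{OneMax}(x)=\sum_{i=1}^n x_i$ on $\{0,1\}^n$, i.e. $\mathrm{E}[T_f]\ge\mathrm{E}[T_{\textsc{OneMax}}]$.
   Context: The (1+1)~EA minimizing $f\colon\{0,1\}^n\to\mathbb{R}$: choose $x^{(0)}\in\{0,1\}^n$ uniformly at random; for $t=0,1,2,\dots$, sample $y^{(t)}$ by flipping each bit of $x^{(t)}$ independently with probability $1/n$; set $x^{(t+1)}:=y^{(t)}$ if $f(y^{(t)})\le f(x^{(t)})$ and $x^{(t+1)}:=x^{(t)}$ otherwise. The optimization time is the random variable $T_f=\min\{t\in\mathbb{N}: f(x^{(t)})=\min_{z\in\{0,1\}^n}f(z)\}$. *)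

(* Defs.v *)
(* Stdlib reals.  Bit strings of {0,1}^n are represented as
   lists of booleans of length n; all finite sums range over the explicit
   enumeration [all_bits n] of {0,1}^n. *)
From Stdlib Require Import Reals List.
Open Scope R_scope.

Fixpoint all_bits (n : nat) : list (list bool) :=
  match n with
  | O => nil :: nil
  | S m => map (cons false) (all_bits m) ++ map (cons true) (all_bits m)
  end.

Definition sumL {A : Type} (l : list A) (g : A -> R) : R :=
  fold_right (fun a acc => g a + acc) 0 l.

Fixpoint hamming (x y : list bool) : nat :=
  match x, y with
  | a :: x', b :: y' => (if Bool.eqb a b then 0 else 1) + hamming x' y'
  | _, _ => 0
  end%nat.

Definition mut (n : nat) (x y : list bool) : R :=
  (/ INR n) ^ (hamming x y) * (1 - / INR n) ^ (n - hamming x y).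

Definition bits_eq_dec := list_eq_dec Bool.bool_dec.

Definition ind_eq (a b : list bool) : R := if bits_eq_dec a b then 1 else 0.

(* transition kernel of the (1+1) EA minimizing f: probability that
   x^(t+1) = z given x^(t) = x *)
Definition ea_kernel (f : list bool -> R) (n : nat) (x z : list bool) : R :=
  sumL (all_bits n)
    (fun y => mut n x y *
       (if Rle_dec (f y) (f x) then ind_eq z y else ind_eq z x)).

Definition fmin (f : list bool -> R) (n : nat) : R :=
  fold_right (fun y m => Rmin (f y) m) (f (repeat false n)) (all_bits n).

Definition not_opt (f : list bool -> R) (n : nat) (x : list bool) : R :=
  if Req_EM_T (f x) (fmin f n) then 0 else 1.

(* surv f n t x = Pr[ x^(0), ..., x^(t) all non-optimal | x^(0) = x ] *)
Fixpoint surv (f : list bool -> R) (n : nat) (t : nat) (x : list bool) : R :=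
  match t with
  | O => not_opt f n x
  | S t' => not_opt f n x * sumL (all_bits n) (fun z => ea_kernel f n x z * surv f n t' z)
  end.

(* Pr[T_f > t], with x^(0) uniform on {0,1}^n *)
Definition tail_prob (f : list bool -> R) (n : nat) (t : nat) : R :=
  sumL (all_bits n) (fun x => / 2 ^ n * surv f n t x).

(* E[T_f] = sum_{t >= 0} Pr[T_f > t] = e *)
Definition expected_time (f : list bool -> R) (n : nat) (e : R) : Prop :=
  infinite_sum (tail_prob f n) e.

Definition OneMax (x : list bool) : R := INR (count_occ Bool.bool_dec x true).

Definition unique_global_min (f : list bool -> R) (n : nat) : Prop :=
  exists x, length x = n /\
    forall y, length y = n -> y <> x -> f x < f y.

(* Main.v *)
Require Import Defs.
From Stdlib Require Import Reals List Lia Lra FunctionalExtensionality.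
Open Scope R_scope.

Lemma sumL_app {A} (l1 l2 : list A) g : sumL (l1 ++ l2) g = sumL l1 g + sumL l2 g.
Proof. induction l1; simpl; [ring| rewrite IHl1; ring]. Qed.
Lemma sumL_map {A B} (h : A -> B) l g : sumL (map h l) g = sumL l (fun a => g (h a)).
Proof. induction l; simpl; [ring| rewrite IHl; ring]. Qed.
Lemma sumL_ext {A} (l : list A) g1 g2 : (forall a, In a l -> g1 a = g2 a) -> sumL l g1 = sumL l g2.
Proof. induction l; simpl; intros H; [ring|]. rewrite H by auto. rewrite IHl by auto. ring. Qed.
Lemma sumL_le {A} (l : list A) g1 g2 : (forall a, In a l -> g1 a <= g2 a) -> sumL l g1 <= sumL l g2.
Proof. induction l; simpl; intros H; [lra|]. apply Rplus_le_compat; auto. Qed.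
Lemma sumL_plus {A} (l : list A) g1 g2 : sumL l (fun a => g1 a + g2 a) = sumL l g1 + sumL l g2.
Proof. induction l; simpl; [ring| rewrite IHl; ring]. Qed.
Lemma sumL_minus {A} (l : list A) g1 g2 : sumL l (fun a => g1 a - g2 a) = sumL l g1 - sumL l g2.
Proof. induction l; simpl; [ring| rewrite IHl; ring]. Qed.
Lemma sumL_mult_l {A} (l : list A) c g : sumL l (fun a => c * g a) = c * sumL l g.
Proof. induction l; simpl; [ring| rewrite IHl; ring]. Qed.
Lemma sumL_zero {A} (l : list A) g : (forall a, g a = 0) -> sumL l g = 0.
Proof. induction l; simpl; intros H; [ring| rewrite H, IHl; auto; ring]. Qed.
Lemma sumL_swap {A B} (l1 : list A) (l2 : list B) g :
  sumL l1 (fun a => sumL l2 (fun b => g a b)) = sumL l2 (fun b => sumL l1 (fun a => g a b)).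
Proof.
  induction l1; simpl. - symmetry. apply sumL_zero. reflexivity.
  - rewrite IHl1. rewrite <- sumL_plus. reflexivity.
Qed.

Lemma all_bits_len m y : In y (all_bits m) <-> length y = m.
Proof.
  revert y; induction m; simpl; intros y.
  - split; [intros [<-|[]]; reflexivity| destruct y; simpl; [auto|discriminate]].
  - rewrite in_app_iff, !in_map_iff. split.
    + intros [[y' [<- H]]|[y' [<- H]]]; simpl; f_equal; apply IHm; auto.
    + destruct y as [|b y]; simpl; [discriminate|]. intros H; injection H; intros H'.
      destruct b; [right|left]; exists y; split; auto; apply IHm; auto.
Qed.

Lemma sumL_const m c : sumL (all_bits m) (fun _ => c) = c * 2 ^ m.
Proof. induction m; simpl; [ring|]. rewrite sumL_app, !sumL_map, IHm. ring. Qed.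

Lemma hamming_le x a : (hamming x a <= length x)%nat.
Proof. revert a; induction x as [|c x IHx]; intros [|b a]; simpl; try lia. specialize (IHx a). destruct (Bool.eqb c b); lia. Qed.

Lemma hamming_0 x a : length x = length a -> hamming x a = 0%nat -> x = a.
Proof. revert a; induction x as [|c x IHx]; intros [|b a]; simpl; try discriminate; auto.
  intros Hl H. destruct c, b; simpl in H; try discriminate; f_equal; apply IHx; auto. Qed.

Lemma hamming_refl x : hamming x x = 0%nat.
Proof. induction x; simpl; auto. destruct a; simpl; auto. Qed.

Lemma ind_cons_same b w v : ind_eq (b :: w) (b :: v) = ind_eq w v.
Proof. unfold ind_eq. destruct (bits_eq_dec (b::w) (b::v)), (bits_eq_dec w v); auto.
  - injection e; intros; contradiction. - subst; contradiction. Qed.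
Lemma ind_cons_diff b d w v : b <> d -> ind_eq (b :: w) (d :: v) = 0.
Proof. intros H. unfold ind_eq. destruct (bits_eq_dec (b::w) (d::v)); auto. injection e; intros; contradiction. Qed.

Lemma sumL_ind m v h : length v = m -> sumL (all_bits m) (fun w => ind_eq w v * h w) = h v.
Proof.
  revert v h; induction m; intros v h Hv.
  - destruct v; [|discriminate]. simpl. unfold ind_eq. destruct (bits_eq_dec nil nil); [ring|congruence].
  - destruct v as [|b v]; [discriminate|]. simpl in Hv; injection Hv; intros Hv'.
    simpl. rewrite sumL_app, !sumL_map. destruct b.
    + rewrite (sumL_zero _ (fun a => ind_eq (false :: a) (true :: v) * h (false :: a))).
      2:{ intros a. rewrite ind_cons_diff by discriminate. ring. }
      rewrite (sumL_ext _ _ (fun a => ind_eq a v * h (true :: a))).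
      2:{ intros a _. rewrite ind_cons_same. reflexivity. }
      rewrite (IHm v (fun a => h (true :: a))); auto. ring.
    + rewrite (sumL_zero _ (fun a => ind_eq (true :: a) (false :: v) * h (true :: a))).
      2:{ intros a. rewrite ind_cons_diff by discriminate. ring. }
      rewrite (sumL_ext _ _ (fun a => ind_eq a v * h (false :: a))).
      2:{ intros a _. rewrite ind_cons_same. reflexivity. }
      rewrite (IHm v (fun a => h (false :: a))); auto. ring.
Qed.

Lemma ham_sym m a phi : length a = m ->
  sumL (all_bits m) (fun x => phi (hamming x a)) = sumL (all_bits m) (fun x => phi (hamming x (repeat false m))).
Proof.
  revert a phi; induction m; intros a phi Ha.
  - destruct a; [reflexivity|discriminate].
  - destruct a as [|b a]; [discriminate|]. simpl in Ha; injection Ha; intros Ha'.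
    simpl. rewrite !sumL_app, !sumL_map. simpl.
    pose proof (IHm a phi Ha') as H1. pose proof (IHm a (fun k => phi (S k)) Ha') as H2.
    simpl in H1, H2.
    destruct b; simpl; rewrite H1, H2; ring.
Qed.

Definition Wt (m : nat) (p : R) (x y : list bool) : R :=
  p ^ hamming x y * (1 - p) ^ (m - hamming x y).
Definition Fsum m p a x (psi : nat -> R) :=
  sumL (all_bits m) (fun y => Wt m p x y * psi (hamming y a)).
Definition op (k : bool) (p : R) (psi : nat -> R) (e : nat) : R :=
  if k then p * psi e + (1 - p) * psi (S e) else (1 - p) * psi e + p * psi (S e).
Definition Fc m p c psi := Nat.iter (m - c) (op false p) (Nat.iter c (op true p) psi) 0%nat.

Lemma Fsum_cons m p b a c x psi : length x = m ->
  Fsum (S m) p (b :: a) (c :: x) psi = Fsum m p a x (op (negb (Bool.eqb c b)) p psi).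
Proof.
  intros Hx. unfold Fsum. simpl all_bits. rewrite sumL_app, !sumL_map, <- sumL_plus.
  apply sumL_ext. intros y Hy. apply all_bits_len in Hy.
  pose proof (hamming_le x y) as Hh. set (h := hamming x y) in *.
  assert (E : (S m - h = S (m - h))%nat) by lia.
  unfold Wt, op; destruct b, c; cbn [hamming Bool.eqb Nat.add negb]; fold h; rewrite ?E;
  cbn [Nat.sub pow]; ring.
Qed.

Lemma op_comm k1 k2 p psi : op k1 p (op k2 p psi) = op k2 p (op k1 p psi).
Proof. apply functional_extensionality; intros e. destruct k1, k2; unfold op; ring. Qed.

Lemma iter_op_comm j k k' p psi :
  op k p (Nat.iter j (op k' p) psi) = Nat.iter j (op k' p) (op k p psi).
Proof. induction j; simpl; auto. rewrite op_comm, IHj. reflexivity. Qed.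

Lemma Fsum_Fc p x : forall a psi, length a = length x ->
  Fsum (length x) p a x psi = Fc (length x) p (hamming x a) psi.
Proof.
  induction x as [|c x IH]; intros [|b a] psi Hl; try discriminate.
  - unfold Fsum, Fc. simpl. unfold Wt; simpl. ring.
  - simpl in Hl; injection Hl; intros Hl'. simpl length.
    rewrite Fsum_cons by auto. rewrite IH by auto.
    pose proof (hamming_le x a) as Hh.
    unfold Fc. simpl hamming. destruct c, b; simpl negb; simpl Bool.eqb; cbv iota;
    rewrite ?Nat.add_0_l.
    all: try (rewrite <- iter_op_comm, <- iter_op_comm;
      replace (S (length x) - hamming x a)%nat with (S (length x - hamming x a)) by lia;
      reflexivity).
    all: rewrite <- iter_op_comm; reflexivity.
Qed.

Definition mono (phi : nat -> R) := forall e, phi e <= phi (S e).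
Lemma mono_le phi : mono phi -> forall e e', (e <= e')%nat -> phi e <= phi e'.
Proof. intros H e e' Hle; induction Hle; [lra| specialize (H m); lra]. Qed.

Lemma op_mono k p phi : 0 <= p <= 1 -> mono phi -> mono (op k p phi).
Proof. intros Hp H e. pose proof (H e); pose proof (H (S e)). unfold op; destruct k; nra. Qed.
Lemma op_le k p phi phi' : 0 <= p <= 1 -> (forall e, phi e <= phi' e) -> forall e, op k p phi e <= op k p phi' e.
Proof. intros Hp H e. pose proof (H e); pose proof (H (S e)). unfold op; destruct k; nra. Qed.
Lemma op_nonneg k p phi : 0 <= p <= 1 -> (forall e, 0 <= phi e) -> forall e, 0 <= op k p phi e.
Proof. intros Hp H e. pose proof (H e); pose proof (H (S e)). unfold op; destruct k; nra. Qed.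
Lemma op01 p phi : 0 <= p <= /2 -> mono phi -> forall e, op false p phi e <= op true p phi e.
Proof. intros Hp H e. pose proof (H e). unfold op; nra. Qed.

Lemma iter_mono j k p phi : 0 <= p <= 1 -> mono phi -> mono (Nat.iter j (op k p) phi).
Proof. intros; induction j; simpl; auto. apply op_mono; auto. Qed.
Lemma iter_le j k p phi phi' : 0 <= p <= 1 -> (forall e, phi e <= phi' e) ->
  forall e, Nat.iter j (op k p) phi e <= Nat.iter j (op k p) phi' e.
Proof. intros Hp H; induction j; simpl; auto. apply op_le; auto. Qed.
Lemma iter_nonneg j k p phi : 0 <= p <= 1 -> (forall e, 0 <= phi e) ->
  forall e, 0 <= Nat.iter j (op k p) phi e.
Proof. intros Hp H; induction j; simpl; auto. apply op_nonneg; auto. Qed.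

Lemma Fc_le_psi m p c psi psi' : 0 <= p <= 1 -> (forall e, psi e <= psi' e) -> Fc m p c psi <= Fc m p c psi'.
Proof. intros. unfold Fc. apply iter_le; auto. apply iter_le; auto. Qed.
Lemma Fc_nonneg m p c psi : 0 <= p <= 1 -> (forall e, 0 <= psi e) -> 0 <= Fc m p c psi.
Proof. intros. unfold Fc. apply iter_nonneg; auto. apply iter_nonneg; auto. Qed.

Lemma Fc_le_S m p c psi : 0 <= p <= /2 -> mono psi -> (S c <= m)%nat -> Fc m p c psi <= Fc m p (S c) psi.
Proof.
  intros Hp Hm Hc. unfold Fc.
  replace (m - c)%nat with (S (m - S c)) by lia. 
  set (X := Nat.iter c (op true p) psi). set (k := (m - S c)%nat).
  change (Nat.iter (S k) (op false p) X 0%nat) with (op false p (Nat.iter k (op false p) X) 0%nat).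
  rewrite iter_op_comm.
  change (Nat.iter (S c) (op true p) psi) with (op true p X).
  apply iter_le; [lra|]. apply op01; auto. apply iter_mono; auto; lra.
Qed.
Lemma Fc_le_c m p c c' psi : 0 <= p <= /2 -> mono psi -> (c <= c')%nat -> (c' <= m)%nat ->
  Fc m p c psi <= Fc m p c' psi.
Proof.
  intros Hp Hm Hc Hc'. induction Hc; [lra|].
  eapply Rle_trans; [apply IHHc; lia|]. apply Fc_le_S; auto.
Qed.

Lemma op_one k p : op k p (fun _ => 1) = (fun _ => 1).
Proof. apply functional_extensionality; intros; unfold op; destruct k; ring. Qed.
Lemma Fc_one m p c : Fc m p c (fun _ => 1) = 1.
Proof.
  unfold Fc. assert (forall j k, Nat.iter j (op k p) (fun _ => 1) = fun _ => 1).
  { induction j; simpl; intros; auto. rewrite IHj, op_one; auto. }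
  rewrite !H. reflexivity.
Qed.

Fixpoint G (n : nat) (p : R) (t c : nat) : R :=
  match t with
  | O => if Nat.eqb c 0 then 0 else 1
  | S t' => (if Nat.eqb c 0 then 0 else 1) * Fc n p c (fun e => G n p t' (Nat.min e c))
  end.

Lemma G_nonneg n p t c : 0 <= p <= 1 -> 0 <= G n p t c.
Proof.
  intros Hp; revert c; induction t; intros c; simpl; destruct (Nat.eqb c 0); try lra.
  rewrite Rmult_1_l. apply Fc_nonneg; auto.
Qed.

Lemma G_zero n p t : G n p t 0 = 0.
Proof. destruct t; simpl; ring. Qed.

Lemma G_mono n p t : 0 <= p <= 1 -> ((2 <= n)%nat -> p <= /2) ->
  forall c c', (c <= c')%nat -> (c' <= n)%nat -> G n p t c <= G n p t c'.
Proof.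
  intros Hp Hp2; induction t; intros c c' Hc Hc'; simpl.
  - destruct (Nat.eqb_spec c 0), (Nat.eqb_spec c' 0); lra || lia.
  - destruct (Nat.eqb_spec c 0).
    + rewrite Rmult_0_l. destruct (Nat.eqb c' 0); [lra|]. rewrite Rmult_1_l.
      apply Fc_nonneg; auto. intros; apply G_nonneg; auto.
    + destruct (Nat.eqb_spec c' 0); [lia|]. rewrite !Rmult_1_l.
      destruct (Nat.eq_dec c c') as [<-|Hne]; [lra|].
      eapply Rle_trans.
      * apply Fc_le_psi with (psi' := fun e => G n p t (Nat.min e c')); auto.
        intros e; apply IHt; lia.
      * apply Fc_le_c; try lia.
        -- split; [lra| apply Hp2; lia].
        -- intros e. apply IHt; lia.
Qed.

Definition acc (g : list bool -> R) (x y : list bool) :=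
  if Rle_dec (g y) (g x) then y else x.

Lemma ea_sum g n x S : length x = n ->
  sumL (all_bits n) (fun w => ea_kernel g n x w * S w) =
  sumL (all_bits n) (fun y => mut n x y * S (acc g x y)).
Proof.
  intros Hx. unfold ea_kernel.
  rewrite (sumL_ext _ _ (fun w => sumL (all_bits n) (fun y => ind_eq w (acc g x y) * (mut n x y * S w)))).
  2:{ intros w _. rewrite Rmult_comm, <- sumL_mult_l. apply sumL_ext. intros y _.
      unfold acc. destruct (Rle_dec (g y) (g x)); ring. }
  rewrite sumL_swap. apply sumL_ext. intros y Hy.
  rewrite (sumL_ind n (acc g x y) (fun w => mut n x y * S w)); auto.
  unfold acc. destruct (Rle_dec (g y) (g x)); auto. apply all_bits_len; auto.
Qed.

Lemma acc_len g n x y : length x = n -> length y = n -> length (acc g x y) = n.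
Proof. unfold acc; destruct (Rle_dec _ _); auto. Qed.

Lemma fold_min_le (f : list bool -> R) l i y : In y l -> fold_right (fun y m => Rmin (f y) m) i l <= f y.
Proof. induction l; simpl; [tauto|]. intros [<-|H]; [apply Rmin_l|]. eapply Rle_trans; [apply Rmin_r| auto]. Qed.
Lemma fold_min_ge (f : list bool -> R) l i v : v <= i -> (forall y, In y l -> v <= f y) -> v <= fold_right (fun y m => Rmin (f y) m) i l.
Proof. induction l; simpl; auto. intros Hi H. apply Rmin_glb; auto. Qed.

Lemma fmin_eq f n xs : length xs = n -> (forall y, length y = n -> f xs <= f y) -> fmin f n = f xs.
Proof.
  intros Hl H. unfold fmin. apply Rle_antisym.
  - apply fold_min_le, all_bits_len; auto.
  - apply fold_min_ge. apply H, repeat_length. intros y Hy; apply H, all_bits_len; auto.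
Qed.

Definition cnt (z : list bool) := count_occ Bool.bool_dec z true.
Lemma cnt_ham z : cnt z = hamming z (repeat false (length z)).
Proof.
  unfold cnt; induction z as [|b z IH]; auto. destruct b.
  - rewrite count_occ_cons_eq by auto. simpl. lia.
  - rewrite count_occ_cons_neq by discriminate. simpl. auto.
Qed.

Lemma not_opt_OM n z : not_opt OneMax n z = if Nat.eqb (cnt z) 0 then 0 else 1.
Proof.
  unfold not_opt. rewrite (fmin_eq OneMax n (repeat false n)).
  2: apply repeat_length.
  2:{ intros y _. unfold OneMax. rewrite (proj1 (count_occ_not_In Bool.bool_dec (repeat false n) true)).
      2:{ intros H. apply repeat_spec in H. discriminate. }
      apply pos_INR. }
  unfold OneMax. rewrite (proj1 (count_occ_not_In Bool.bool_dec (repeat false n) true)).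
  2:{ intros H. apply repeat_spec in H. discriminate. }
  fold (cnt z). destruct (Nat.eqb_spec (cnt z) 0) as [E|E].
  - rewrite E. destruct (Req_EM_T (INR 0) (INR 0)); auto. contradiction.
  - destruct (Req_EM_T (INR (cnt z)) (INR 0)); auto. apply INR_eq in e. contradiction.
Qed.

Lemma Fsum_n n p a x psi : length x = n -> length a = n -> Fsum n p a x psi = Fc n p (hamming x a) psi.
Proof. intros Hx Ha. subst n. apply Fsum_Fc. auto. Qed.

Lemma surv_OM n t : forall z, length z = n ->
  surv OneMax n t z = G n (/ INR n) t (cnt z).
Proof.
  induction t; intros z Hz; simpl.
  - apply not_opt_OM.
  - rewrite not_opt_OM. f_equal. rewrite ea_sum by auto.
    rewrite (sumL_ext _ _ (fun y => Wt n (/ INR n) z y * (fun e => G n (/ INR n) t (Nat.min e (cnt z))) (hamming y (repeat false n)))).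
    + fold (Fsum n (/ INR n) (repeat false n) z (fun e => G n (/ INR n) t (Nat.min e (cnt z)))).
      rewrite Fsum_n by (auto; apply repeat_length). rewrite <- Hz, <- cnt_ham. reflexivity.
    + intros y Hy. apply all_bits_len in Hy. unfold mut, Wt. f_equal.
      rewrite IHt by (apply acc_len; auto).
      assert (Hc : cnt y = hamming y (repeat false n)) by (rewrite <- Hy; apply cnt_ham).
      rewrite <- Hc. f_equal. unfold acc, OneMax. fold (cnt y) (cnt z).
      destruct (Rle_dec (INR (cnt y)) (INR (cnt z))) as [H|H].
      * apply INR_le in H. lia.
      * assert (~ (cnt y <= cnt z)%nat) by (intros H'; apply H, le_INR; auto). lia.
Qed.

Lemma not_opt_f n f xs x : length xs = n -> (forall y, length y = n -> y <> xs -> f xs < f y) ->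
  length x = n -> not_opt f n x = if Nat.eqb (hamming x xs) 0 then 0 else 1.
Proof.
  intros Hxs Hu Hx. unfold not_opt. rewrite (fmin_eq f n xs); auto.
  2:{ intros y Hy. destruct (bits_eq_dec y xs) as [->|Hne]; [lra|]. apply Rlt_le, Hu; auto. }
  destruct (Nat.eqb_spec (hamming x xs) 0) as [E|E].
  - apply hamming_0 in E; [|congruence]. subst. destruct (Req_EM_T (f xs) (f xs)); auto. contradiction.
  - destruct (Req_EM_T (f x) (f xs)) as [e|]; auto.
    destruct (bits_eq_dec x xs) as [->|Hne]; [rewrite hamming_refl in E; contradiction|].
    specialize (Hu x Hx Hne). lra.
Qed.

Lemma surv_f_ge n f xs : (0 < n)%nat -> length xs = n -> (forall y, length y = n -> y <> xs -> f xs < f y) ->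
  forall t x, length x = n -> G n (/ INR n) t (hamming x xs) <= surv f n t x.
Proof.
  intros Hn Hxs Hu.
  assert (Hp : 0 <= / INR n <= 1).
  { split. apply Rlt_le, Rinv_0_lt_compat, lt_0_INR; auto.
    rewrite <- Rinv_1. apply Rinv_le_contravar; [lra|]. apply (le_INR 1); lia. }
  assert (Hp2 : (2 <= n)%nat -> / INR n <= / 2).
  { intros H. apply Rinv_le_contravar; [lra|]. apply (le_INR 2); lia. }
  induction t; intros x Hx; simpl.
  - rewrite (not_opt_f n f xs x); auto. lra.
  - rewrite (not_opt_f n f xs x); auto. destruct (Nat.eqb (hamming x xs) 0); [lra|].
    rewrite !Rmult_1_l. rewrite ea_sum by auto.
    rewrite <- Fsum_n by auto. unfold Fsum. apply sumL_le. intros y Hy.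
    apply all_bits_len in Hy. unfold mut. fold (Wt n (/ INR n) x y).
    apply Rmult_le_compat_l.
    { unfold Wt. apply Rmult_le_pos; apply pow_le; lra. }
    eapply Rle_trans; [|apply IHt, acc_len; auto].
    apply G_mono; auto.
    + unfold acc; destruct (Rle_dec _ _); lia.
    + rewrite <- (acc_len f n x y Hx Hy). apply hamming_le.
Qed.

Lemma pow_decr a i j : 0 <= a <= 1 -> (i <= j)%nat -> a ^ j <= a ^ i.
Proof.
  intros Ha H; induction H; [lra|]. simpl. eapply Rle_trans; [|apply IHle].
  pose proof (pow_le a m (proj1 Ha)). nra.
Qed.

Lemma sum_mut n x : (0 < n)%nat -> length x = n -> sumL (all_bits n) (fun y => mut n x y) = 1.
Proof.
  intros Hn Hx. transitivity (Fsum n (/ INR n) x x (fun _ => 1)).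
  - unfold Fsum. apply sumL_ext. intros; unfold mut, Wt; ring.
  - rewrite Fsum_n by auto. apply Fc_one.
Qed.

Lemma surv_le n f xs : (0 < n)%nat -> length xs = n -> (forall y, length y = n -> y <> xs -> f xs < f y) ->
  forall t x, length x = n ->
  surv f n t x <= (1 - (/ INR n) ^ n * (1 - / INR n) ^ (n - 1)) ^ t.
Proof.
  intros Hn Hxs Hu.
  set (p := / INR n). set (q := p ^ n * (1 - p) ^ (n - 1)).
  assert (Hp : 0 < p <= 1).
  { split. apply Rinv_0_lt_compat, lt_0_INR; auto.
    unfold p. rewrite <- Rinv_1. apply Rinv_le_contravar; [lra|]. apply (le_INR 1); lia. }
  assert (Hq : 0 <= q <= 1).
  { unfold q. pose proof (pow_le p n). pose proof (pow_le (1-p) (n-1)).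
    pose proof (pow_decr p 0 n). pose proof (pow_decr (1-p) 0 (n-1)). simpl in *.
    split; [apply Rmult_le_pos; lra|]. assert (p ^ n <= 1) by (apply H1; lra || lia).
    assert ((1-p)^(n-1) <= 1) by (apply H2; lra || lia). nra. }
  assert (Hopt : forall t, surv f n t xs = 0).
  { assert (not_opt f n xs = 0) by (rewrite (not_opt_f n f xs xs), hamming_refl; auto).
    destruct t; simpl; rewrite H; ring. }
  induction t; intros x Hx.
  - simpl. rewrite (not_opt_f n f xs x); auto. destruct (Nat.eqb _ 0); lra.
  - simpl surv. rewrite (not_opt_f n f xs x); auto.
    assert (0 <= (1 - q) ^ t) by (apply pow_le; lra).
    destruct (Nat.eqb_spec (hamming x xs) 0) as [E|E].
    { rewrite Rmult_0_l. apply pow_le. lra. }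
    rewrite Rmult_1_l, ea_sum by auto.
    eapply Rle_trans.
    + apply (sumL_le _ _ (fun y => (1 - q) ^ t * (mut n x y - ind_eq y xs * mut n x y))).
      intros y Hy. apply all_bits_len in Hy.
      assert (Hm : 0 <= mut n x y) by (unfold mut; apply Rmult_le_pos; apply pow_le; fold p; lra).
      destruct (bits_eq_dec y xs) as [->|Hne].
      * unfold acc. destruct (Rle_dec (f xs) (f x)) as [_|C].
        -- rewrite Hopt. unfold ind_eq. destruct (bits_eq_dec xs xs); [|contradiction]. lra.
        -- exfalso. apply C. destruct (bits_eq_dec x xs) as [->|Hne]; [lra|].
           apply Rlt_le, Hu; auto.
      * unfold ind_eq. destruct (bits_eq_dec y xs); [contradiction|].
        rewrite Rmult_0_l, Rminus_0_r, (Rmult_comm ((1 - q) ^ t)). apply Rmult_le_compat_l; auto.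
        apply IHt, acc_len; auto.
    + rewrite sumL_mult_l, sumL_minus, sum_mut, sumL_ind by auto.
      simpl. rewrite (Rmult_comm (1 - q)). apply Rmult_le_compat_l; auto.
      assert (q <= mut n x xs); [|lra].
      unfold q, mut. fold p.
      pose proof (hamming_le x xs). rewrite Hx in H0.
      apply Rmult_le_compat.
      * apply pow_le; lra.
      * apply pow_le; lra.
      * apply pow_decr; lra || lia.
      * apply pow_decr; lra || lia.
Qed.

Theorem theorem8 (n : nat) (f : list bool -> R) :
  (0 < n)%nat -> unique_global_min f n ->
  exists ef eOM : R,
    expected_time f n ef /\ expected_time OneMax n eOM /\ eOM <= ef.
Proof.
  intros Hn [xs [Hxs Hu]].
  set (p := / INR n). set (q := p ^ n * (1 - p) ^ (n - 1)).
  assert (Hp : 0 < p <= 1).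
  { split. apply Rinv_0_lt_compat, lt_0_INR; auto.
    unfold p. rewrite <- Rinv_1. apply Rinv_le_contravar; [lra|]. apply (le_INR 1); lia. }
  assert (Hq : 0 < q <= 1).
  { unfold q. assert (0 < (1 - p) ^ (n - 1)).
    { destruct (Nat.eq_dec n 1) as [->|Hne]; [simpl; lra|].
      apply pow_lt. assert (p <= /2); [|lra].
      apply Rinv_le_contravar; [lra|]. apply (le_INR 2); lia. }
    pose proof (pow_lt p n (proj1 Hp)).
    pose proof (pow_decr p 0 n). pose proof (pow_decr (1-p) 0 (n-1)). simpl in *.
    split; [apply Rmult_lt_0_compat; lra|]. assert (p ^ n <= 1) by (apply H1; lra || lia).
    assert ((1-p)^(n-1) <= 1) by (apply H2; lra || lia). nra. }
  set (r := 1 - q).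
  assert (Hr : Rabs r < 1) by (unfold r; rewrite Rabs_right; lra).
  assert (H2n : 0 < 2 ^ n) by (apply pow_lt; lra).
  assert (Hcmp : forall t, 0 <= tail_prob OneMax n t <= tail_prob f n t).
  { intros t. unfold tail_prob.
    rewrite (sumL_ext _ _ (fun x => (fun k => / 2 ^ n * G n p t k) (hamming x (repeat false n)))).
    2:{ intros x Hx. apply all_bits_len in Hx. rewrite surv_OM by auto.
        rewrite cnt_ham, Hx. reflexivity. }
    split.
    - rewrite <- (sumL_zero (all_bits n) (fun _ => 0)) by auto. apply sumL_le. intros.
      apply Rmult_le_pos; [apply Rlt_le, Rinv_0_lt_compat; auto| apply G_nonneg; lra].
    - pose proof (ham_sym n xs (fun k => / 2 ^ n * G n p t k) Hxs) as HS. cbv beta in HS |- *.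
      rewrite <- HS. apply sumL_le. intros x Hx. apply all_bits_len in Hx.
      apply Rmult_le_compat_l; [apply Rlt_le, Rinv_0_lt_compat; auto|].
      apply surv_f_ge; auto. }
  assert (Hgeo : forall t, 0 <= tail_prob f n t <= 1 * r ^ t).
  { intros t. split; [pose proof (Hcmp t); lra|]. rewrite Rmult_1_l. unfold tail_prob.
    eapply Rle_trans. apply (sumL_le _ _ (fun _ => / 2 ^ n * r ^ t)).
    - intros x Hx. apply all_bits_len in Hx. apply Rmult_le_compat_l; [apply Rlt_le, Rinv_0_lt_compat; auto|].
      apply (surv_le n f xs); auto.
    - rewrite sumL_const. field_simplify; lra. }
  destruct (Rseries_CV_comp (tail_prob f n) (fun k => 1 * r ^ k) Hgeo
              (exist _ (/ (1 - r)) (GP_infinite r Hr))) as [ef Hef].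
  destruct (Rseries_CV_comp (tail_prob OneMax n) (tail_prob f n) Hcmp
              (exist _ ef Hef)) as [eOM HeOM].
  exists ef, eOM. split; [exact Hef|]. split; [exact HeOM|].
  eapply Rle_cv_lim; [|exact HeOM|exact Hef]. intros N; apply sum_Rle; intros k _; apply Hcmp.
Qed.
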